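(* Suppose there are at least three states ($n\ge3$). If an updating rule respects the Blackwell order for a prior $\mu$ in the relative interior of $\Delta$ and its distortion function $\varphi=\varphi^{\mu}$ produces a contractive error but does not produce an expansive error, then $\varphi$ is occasionally stubborn.
   Context: Let $\Theta$ be a finite set of states, $|\Theta|=n$, and $\Delta=\Delta(\Theta)$ the simplex of beliefs, viewed in $\mathbb{R}^{n-1}$. An experiment $\pi:\Theta\to\Delta(S)$ ($S$ finite) with prior $\mu$ induces the Bayesian distribution over posteriors $\rho_B$, a finitely supported distribution on $\Delta$ with mean $\mu$ (every such distribution arises from some experiment). Blackwell order: $\pi\succeq\pi'$ iff $\rho_B'$ is a mean-preserving contraction of $\rho_B$. An updating rule is given, for each prior $\mu$, by a distortion function $\varphi^{\mu}:\Delta\to\Delta$: when the Bayesian posterior is $x$, the decision maker holds belief $\varphi^{\mu}(x)$. For a compact action set $A$, continuous $u:A\times\Theta\to\mathbb{R}$, and consistent choice $a^*:\Delta\to A$ (i.e. $a^*(y)\in\arg\max_{a}\mathbb{E}_y u(a,\theta)$ for all $y$), let $W(x)=\mathbb{E}_x u(a^*(\varphi^{\mu}(x)),\theta)$. The rule respects the Blackwell order for $\mu$ if for all such $A,u,a^*$ and all $\pi\succeq\pi'$, $\mathbb{E}_{\rho_B}W\ge\mathbb{E}_{\rho_B'}W$. For $x,y\in\Delta$, $\ell(x,y)$ is the closed segment between them and $\ell^{\circ}(x,y)=\ell(x,y)\setminus\{x,y\}$. $\varphi$ has an expansive error at $x$ if $\varphi(x)\notin\ell(x,\mu)$, and a contractive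 error at $x$ if $\varphi(x)\in\ell(x,\mu)$ and $\varphi(x)\ne x$; $\varphi$ produces an expansive (contractive) error if it has one at some $x$. Faces of $\Delta$ include vertices, edges, and $\Delta$ itself. Let $\hat{\mathcal E}$ be the set of vertices $e$ with $\varphi(e)\neq e$, and $\hat{\mathcal S}$ the set of faces containing some $x$ with $\varphi(x)\ne x$; $\hat{\mathcal S}_m$ denotes its $m$-dimensional members. $\varphi$ is occasionally stubborn if either $\varphi(x)=x$ for all $x$, or there is a single $x^*\in\Delta$ such that: (i) for every $S\in\hat{\mathcal S}$ of dimension $\ge2$, $\varphi(x)=x^*$ for all $x$ in the relative interior of $S$; (ii) for every edge $S\in\hat{\mathcal S}_1$, $\varphi(x)=x^*$ for all $x$ in the relative interior of $S$, except that if $x^*$ lies in the relative interior of an edge $S_1'\in\hat{\mathcal S}_1$, then $S_1'$ may instead satisfy: there is a vertex $e'$ of $S_1'$ with $\varphi(x)=x^*$ for all $x\in\ell^{\circ}(e',x^* )$ and $\varphi(x)=x$ for all $x\in S_1'\setminus\ell^{\circ}(e',x^* )$; (iii) $\varphi(e)\in\ell(x^*,e)$ for every $e\in\hat{\mathcal E}$. *)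

(* Defs.v *)
From HB Require Import structures.
From mathcomp Require Import all_boot all_order all_algebra.
From mathcomp Require Import boolp classical_sets reals topology normedtype.
Import numFieldNormedType.Exports.

Set Implicit Arguments.
Unset Strict Implicit.
Unset Printing Implicit Defensive.

Import Order.TTheory GRing.Theory Num.Theory.
Local Open Scope ring_scope.

(* States are 'I_n; beliefs are row vectors x : 'rV[R]_n, x 0 θ = prob of θ. *)

Definition simplex (R : realType) (n : nat) (x : 'rV[R]_n) : Prop :=
  (forall i, 0 <= x 0 i) /\ \sum_i x 0 i = 1.

Definition rint_simplex (R : realType) (n : nat) (x : 'rV[R]_n) : Prop :=
  (forall i, 0 < x 0 i) /\ \sum_i x 0 i = 1.

Definition segment (R : realType) (n : nat) (x y z : 'rV[R]_n) : Prop :=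
  exists t : R, 0 <= t <= 1 /\ z = t *: x + (1 - t) *: y.

Definition open_segment (R : realType) (n : nat) (x y z : 'rV[R]_n) : Prop :=
  segment x y z /\ z <> x /\ z <> y.

Definition vertex (R : realType) (n : nat) (i : 'I_n) : 'rV[R]_n := delta_mx 0 i.

(* Faces of the simplex are indexed by their (nonempty) vertex sets F;
   the face has dimension #|F| - 1. *)
Definition in_face (R : realType) (n : nat) (F : {set 'I_n}) (x : 'rV[R]_n) : Prop :=
  simplex x /\ (forall i, i \notin F -> x 0 i = 0).

Definition relint_face (R : realType) (n : nat) (F : {set 'I_n}) (x : 'rV[R]_n) : Prop :=
  simplex x /\ (forall i, (i \in F) <-> 0 < x 0 i).

Definition experiment (R : realType) (n : nat) (S : finType) (pi : 'I_n -> S -> R) : Prop :=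
  (forall th s, 0 <= pi th s) /\ (forall th, \sum_s pi th s = 1).

Definition sigprob (R : realType) (n : nat) (S : finType) (mu : 'rV[R]_n)
  (pi : 'I_n -> S -> R) (s : S) : R := \sum_th mu 0 th * pi th s.

(* Bayesian posterior after signal s (only relevant when sigprob > 0) *)
Definition posterior (R : realType) (n : nat) (S : finType) (mu : 'rV[R]_n)
  (pi : 'I_n -> S -> R) (s : S) : 'rV[R]_n :=
  \row_th (mu 0 th * pi th s / sigprob mu pi s).

(* E_{rho_B} W : rho_B puts mass sigprob s on posterior s *)
Definition expect_post (R : realType) (n : nat) (S : finType) (mu : 'rV[R]_n)
  (pi : 'I_n -> S -> R) (W : 'rV[R]_n -> R) : R :=
  \sum_s sigprob mu pi s * W (posterior mu pi s).

(* Blackwell order pi >= pi' : rho_B' is a mean-preserving contraction of rho_B,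
   i.e. there is a coupling w of the two distributions over posteriors
   (indexed by signals) such that the conditional mean of the pi-posterior
   given the pi'-posterior is the pi'-posterior. *)
Definition blackwell_geq (R : realType) (n : nat) (S S' : finType) (mu : 'rV[R]_n)
  (pi : 'I_n -> S -> R) (pi' : 'I_n -> S' -> R) : Prop :=
  exists w : S' -> S -> R,
    (forall s' s, 0 <= w s' s) /\
    (forall s, \sum_s' w s' s = sigprob mu pi s) /\
    (forall s', \sum_s w s' s = sigprob mu pi' s') /\
    (forall s', \sum_s w s' s *: posterior mu pi s = sigprob mu pi' s' *: posterior mu pi' s').

Definition exp_util (R : realType) (n : nat) (T : Type) (u : T -> 'I_n -> R)
  (y : 'rV[R]_n) (a : T) : R := \sum_th y 0 th * u a th.

Definition Wfun (R : realType) (n : nat) (T : Type) (u : T -> 'I_n -> R)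
  (astar : 'rV[R]_n -> T) (phi : 'rV[R]_n -> 'rV[R]_n) (x : 'rV[R]_n) : R :=
  exp_util u x (astar (phi x)).

(* The rule (with distortion phi for prior mu) respects the Blackwell order:
   for every compact action set A (a compact topological space), every
   u : A x Θ -> R continuous (Θ finite discrete, so: continuous in a for each θ),
   every consistent choice a*, and all experiments pi >= pi'. *)
Definition respects_blackwell (R : realType) (n : nat) (mu : 'rV[R]_n)
  (phi : 'rV[R]_n -> 'rV[R]_n) : Prop :=
  forall (A : topologicalType) (u : A -> 'I_n -> R) (astar : 'rV[R]_n -> A),
    compact [set: A] ->
    (forall th, continuous (fun a => u a th)) ->
    (forall y, simplex y -> forall a, exp_util u y a <= exp_util u y (astar y)) ->
    forall (S S' : finType) (pi : 'I_n -> S -> R) (pi' : 'I_n -> S' -> R),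
      experiment pi -> experiment pi' -> blackwell_geq mu pi pi' ->
      expect_post mu pi' (Wfun u astar phi) <= expect_post mu pi (Wfun u astar phi).

Definition expansive_at (R : realType) (n : nat) (mu : 'rV[R]_n)
  (phi : 'rV[R]_n -> 'rV[R]_n) (x : 'rV[R]_n) : Prop :=
  ~ segment x mu (phi x).

Definition contractive_at (R : realType) (n : nat) (mu : 'rV[R]_n)
  (phi : 'rV[R]_n -> 'rV[R]_n) (x : 'rV[R]_n) : Prop :=
  segment x mu (phi x) /\ phi x <> x.

Definition produces_expansive (R : realType) (n : nat) (mu : 'rV[R]_n)
  (phi : 'rV[R]_n -> 'rV[R]_n) : Prop :=
  exists x, simplex x /\ expansive_at mu phi x.

Definition produces_contractive (R : realType) (n : nat) (mu : 'rV[R]_n)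
  (phi : 'rV[R]_n -> 'rV[R]_n) : Prop :=
  exists x, simplex x /\ contractive_at mu phi x.

Definition in_Shat (R : realType) (n : nat) (phi : 'rV[R]_n -> 'rV[R]_n)
  (F : {set 'I_n}) : Prop :=
  exists x, in_face F x /\ phi x <> x.

Definition occasionally_stubborn (R : realType) (n : nat)
  (phi : 'rV[R]_n -> 'rV[R]_n) : Prop :=
  (forall x, simplex x -> phi x = x) \/
  exists xs : 'rV[R]_n, simplex xs /\
    (forall F, in_Shat phi F -> (3 <= #|F|)%N ->
       forall x, relint_face F x -> phi x = xs) /\
    (forall F, in_Shat phi F -> #|F| = 2%N ->
       (forall x, relint_face F x -> phi x = xs) \/
       (relint_face F xs /\
        exists2 i, i \in F &
          (forall x, open_segment (vertex R i) xs x -> phi x = xs) /\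
          (forall x, in_face F x -> ~ open_segment (vertex R i) xs x -> phi x = x))) /\
    (forall i, phi (vertex R i) <> vertex R i ->
       segment xs (vertex R i) (phi (vertex R i))).

(* Main.v *)
Require Import Defs.
From HB Require Import structures.
From mathcomp Require Import all_boot all_order all_algebra.
From mathcomp Require Import boolp classical_sets reals topology normedtype.
From mathcomp Require Import lra ring zify.
Import numFieldNormedType.Exports.
Import Order.TTheory GRing.Theory Num.Theory.
Local Open Scope ring_scope.
Set Implicit Arguments.
Unset Strict Implicit.

Section Exp.
Variables (R : realType) (n : nat) (mu : 'rV[R]_n).
Hypothesis mupos : forall th, 0 < mu 0 th.

Definition mkexp (S : finType) (q : S -> R) (v : S -> 'rV[R]_n) : 'I_n -> S -> R :=
  fun th s => q s * v s 0 th / mu 0 th.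

Variables (S : finType) (q : S -> R) (v : S -> 'rV[R]_n).
Hypothesis qpos : forall s, 0 < q s.
Hypothesis vnn : forall s th, 0 <= v s 0 th.
Hypothesis vsum : forall s, \sum_th v s 0 th = 1.
Hypothesis qvmu : \sum_s q s *: v s = mu.

Lemma mulKdiv (a b : R) : b != 0 -> b * (a / b) = a.
Proof. by move=> nz; rewrite [b * _]mulrC divfK. Qed.

Lemma mkexp_sig s : sigprob mu (mkexp q v) s = q s.
Proof.
rewrite /sigprob /mkexp.
under eq_bigr => th _ do rewrite mulKdiv ?(gt_eqF (mupos th)) //.
by rewrite -mulr_sumr vsum mulr1.
Qed.

Lemma mkexp_post s : posterior mu (mkexp q v) s = v s.
Proof.
apply/rowP => th; rewrite !mxE mkexp_sig /mkexp.
rewrite mulKdiv ?(gt_eqF (mupos th)) // mulrC mulKf // gt_eqF //.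
Qed.

Lemma mkexp_exp : experiment (mkexp q v).
Proof.
split.
  move=> th s; rewrite /mkexp; apply: divr_ge0; last exact: ltW.
  by apply: mulr_ge0; [exact: ltW|].
move=> th; rewrite /mkexp -mulr_suml.
have -> : \sum_s q s * v s 0 th = mu 0 th.
  by rewrite -qvmu summxE; apply: eq_bigr => s _; rewrite mxE.
by rewrite divff // gt_eqF.
Qed.

Lemma mkexp_E W : expect_post mu (mkexp q v) W = \sum_s q s * W (v s).
Proof. by apply: eq_bigr => s _; rewrite mkexp_sig mkexp_post. Qed.
End Exp.

Lemma pos_lb (R : realType) (n : nat) (P : pred 'I_n) (f : 'I_n -> R) :
  (forall k, P k -> 0 < f k) -> exists e, 0 < e /\ forall k, P k -> e <= f k.
Proof.
move=> fpos.
have Sge : 0 <= \sum_(k | P k) (f k)^-1.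
  by apply: sumr_ge0 => k Pk; rewrite invr_ge0 ltW // fpos.
exists (1 + \sum_(k | P k) (f k)^-1)^-1; split.
  by rewrite invr_gt0; lra.
move=> k Pk; rewrite -[f k]invrK lef_pV2 ?posrE ?invr_gt0 ?fpos //; last lra.
rewrite (bigD1 k) //=.
have : 0 <= \sum_(i | P i && (i != k)) (f i)^-1.
  by apply: sumr_ge0 => i /andP[Pi _]; rewrite invr_ge0 ltW // fpos.
lra.
Qed.

Lemma sum3 (V : zmodType) (F : nat -> V) : \sum_(s < 3) F (nat_of_ord s) = F 0%N + F 1%N + F 2%N.
Proof. by rewrite !big_ord_recr big_ord0 /= add0r. Qed.
Lemma sum2 (V : zmodType) (F : nat -> V) : \sum_(s < 2) F (nat_of_ord s) = F 0%N + F 1%N.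
Proof. by rewrite !big_ord_recr big_ord0 /= add0r. Qed.

Definition q3n (R : ringType) (a b c : R) (k : nat) : R :=
  match k with O => a | S O => b | _ => c end.
Definition v3n (T : Type) (a b c : T) (k : nat) : T :=
  match k with O => a | S O => b | _ => c end.
Definition cwn (R : ringType) (a b c : R) (i j : nat) : R :=
  match i, j with O, O => a | O, S O => b | S O, S (S O) => c | _, _ => 0 end.

Lemma simplex_le1 (R : realType) n (x : 'rV[R]_n) k : simplex x -> x 0 k <= 1.
Proof.
case=> x0 xs; rewrite -xs (bigD1 k) //= lerDl.
by apply: sumr_ge0 => i _.
Qed.

Lemma simplex_comb (R : realType) n (x y : 'rV[R]_n) (l : R) :
  simplex x -> simplex y -> 0 <= l <= 1 -> simplex (l *: x + (1 - l) *: y).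
Proof.
move=> [x0 xs] [y0 ys] /andP[l0 l1]; split.
  move=> i; rewrite !mxE; apply: addr_ge0; apply: mulr_ge0 => //; lra.
under eq_bigr => i _ do rewrite !mxE.
by rewrite big_split /= -!mulr_sumr xs ys; ring.
Qed.

Lemma conv_ineq (R : realType) (n : nat) (mu : 'rV[R]_n) (phi : 'rV[R]_n -> 'rV[R]_n)
  (A : topologicalType) (u : A -> 'I_n -> R) (astar : 'rV[R]_n -> A) :
  rint_simplex mu -> respects_blackwell mu phi ->
  compact [set: A] -> (forall th, continuous (fun a => u a th)) ->
  (forall y, simplex y -> forall a, exp_util u y a <= exp_util u y (astar y)) ->
  forall (x y : 'rV[R]_n) (lam : R), simplex x -> simplex y -> 0 < lam < 1 ->
  Wfun u astar phi (lam *: x + (1 - lam) *: y) <=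
    lam * Wfun u astar phi x + (1 - lam) * Wfun u astar phi y.
Proof.
move=> [mupos musum] RB cA cu cons x y lam sx sy /andP[l0 l1].
have [p [p0 pmu]] := @pos_lb R n predT (fun k => mu 0 k) (fun k _ => mupos k).
set q := p / (1 + p).
have q0 : 0 < q by rewrite divr_gt0 //; lra.
have q1 : q < 1 by rewrite ltr_pdivrMr; lra.
have qmu : forall k, q <= mu 0 k.
  move=> k; apply: le_trans (pmu k isT); rewrite ler_pdivrMr; nra.
have [z zdef] : exists z, z = lam *: x + (1 - lam) *: y by eexists.
have sz : simplex z by rewrite zdef; apply: simplex_comb => //; lra.
have [w wdef] : exists w, w = (1 - q)^-1 *: (mu - q *: z) by eexists.
have sw : simplex w.
  split.
    move=> k; move: (simplex_le1 k sz) (sz.1 k) (qmu k); rewrite wdef !mxE => h1 h2 h3.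
    apply: mulr_ge0; first by rewrite invr_ge0; lra.
    nra.
  rewrite wdef; under eq_bigr => k _ do rewrite !mxE.
  rewrite -mulr_sumr sumrB -mulr_sumr musum sz.2 mulr1 mulVf //; lra.
pose q3 := q3n (q * lam) (q * (1 - lam)) (1 - q).
pose v3 := v3n x y w.
pose q2 := q3n q (1 - q) (1 - q).
pose v2 := v3n z w w.
pose cw := fun (s' : 'I_2) (s : 'I_3) => cwn (q * lam) (q * (1 - lam)) (1 - q) s' s.
have q3pos : forall s : 'I_3, 0 < q3 s.
  move=> [[|[|[|k]]] Hk] //=; rewrite /q3 /=; try apply: mulr_gt0; lra.
have q2pos : forall s : 'I_2, 0 < q2 s.
  move=> [[|[|k]] Hk] //=; rewrite /q2 /=; lra.
have v3s : forall s : 'I_3, simplex (v3 s).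
  by move=> [[|[|[|k]]] Hk].
have v2s : forall s : 'I_2, simplex (v2 s).
  by move=> [[|[|k]] Hk].
have mu3 : \sum_(s < 3) q3 s *: v3 s = mu.
  rewrite (sum3 (fun k => q3 k *: v3 k)) /q3 /v3 /= wdef zdef.
  apply/rowP => k; rewrite !mxE; field; lra.
have mu2 : \sum_(s < 2) q2 s *: v2 s = mu.
  rewrite (sum2 (fun k => q2 k *: v2 k)) /q2 /v2 /= wdef.
  apply/rowP => k; rewrite !mxE; field; lra.
set pi := mkexp mu (fun s : 'I_3 => q3 s) (fun s => v3 s).
set pi' := mkexp mu (fun s : 'I_2 => q2 s) (fun s => v2 s).
have := RB A u astar cA cu cons 'I_3 'I_2 pi pi'.
have vnn3 : forall (s : 'I_3) th, 0 <= v3 s 0 th by move=> s th; exact: (v3s s).1.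
have vsum3 : forall s : 'I_3, \sum_th v3 s 0 th = 1 by move=> s; exact: (v3s s).2.
have vnn2 : forall (s : 'I_2) th, 0 <= v2 s 0 th by move=> s th; exact: (v2s s).1.
have vsum2 : forall s : 'I_2, \sum_th v2 s 0 th = 1 by move=> s; exact: (v2s s).2.
have BW : blackwell_geq mu pi pi'.
  exists cw; split; [|split; [|split]].
    - move=> [[|[|s']] Hs'] [[|[|[|s]]] Hs] //=; rewrite /cw /cwn /=; try apply: mulr_ge0; lra.
    - move=> s; rewrite (mkexp_sig mupos _ vsum3) (sum2 (fun k => cwn (q * lam) (q * (1 - lam)) (1 - q) k s)).
    by case: s => [[|[|[|s]]] Hs] //=; rewrite /q3 /=; ring.
    - move=> s; rewrite (mkexp_sig mupos _ vsum2) (sum3 (fun k => cwn (q * lam) (q * (1 - lam)) (1 - q) s k)).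
    by case: s => [[|[|s]] Hs] //=; rewrite /q2 /=; ring.
    - move=> s; rewrite (mkexp_post mupos q2pos vsum2) (mkexp_sig mupos _ vsum2).
    under eq_bigr => t _ do rewrite (mkexp_post mupos q3pos vsum3).
    rewrite (sum3 (fun k => cwn (q * lam) (q * (1 - lam)) (1 - q) s k *: v3 k)).
    case: s => [[|[|s]] Hs] //=; rewrite /q2 /v2 /v3 /=; apply/rowP => k; rewrite ?zdef !mxE; ring.
move=> H; rewrite -zdef.
have := H (mkexp_exp mupos q3pos vnn3 mu3) (mkexp_exp mupos q2pos vnn2 mu2) BW.
rewrite /pi /pi' (mkexp_E mupos q3pos vsum3) (mkexp_E mupos q2pos vsum2).
rewrite (sum3 (fun k => q3 k * Wfun u astar phi (v3 k))).
rewrite (sum2 (fun k => q2 k * Wfun u astar phi (v2 k))) /q3 /q2 /v3 /v2 /=.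
move=> I.
have : q * Wfun u astar phi z <= q * (lam * Wfun u astar phi x + (1 - lam) * Wfun u astar phi y).
  lra.
by rewrite ler_pM2l.
Qed.

Lemma sum3o (V : zmodType) (f : 'I_3 -> V) : \sum_s f s = f 0 + f 1 + f 2%:R.
Proof.
rewrite !big_ord_recr big_ord0 /= add0r.
by congr (_ + _ + _); congr f; apply: val_inj.
Qed.

Definition indep3 (R : realType) (n : nat) (a b c : 'rV[R]_n) :=
  forall al be ga : R, (forall k, al * a 0 k + be * b 0 k + ga * c 0 k = 0) ->
  [/\ al = 0, be = 0 & ga = 0].

Definition dot (R : realType) (n : nat) (f : 'I_n -> R) (v : 'rV[R]_n) :=
  \sum_k v 0 k * f k.

Lemma solve3 (R : realType) (n : nat) (a b c : 'rV[R]_n) : indep3 a b c ->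
  forall X Y Z : R, exists f : 'I_n -> R, [/\ dot f a = X, dot f b = Y & dot f c = Z].
Proof.
move=> ind X Y Z.
pose M : 'M[R]_(3, n) := \matrix_(i < 3, k < n) (v3n a b c i) 0 k.
have rf : row_free M.
  rewrite -kermx_eq0; apply/eqP/matrixP => i j.
  have KM := mulmx_ker M.
  have H : forall k, (kermx M) i 0 * a 0 k + (kermx M) i 1 * b 0 k + (kermx M) i 2%:R * c 0 k = 0.
    move=> k; have := congr1 (fun A : 'M[R]_(3, n) => A i k) KM.
    by rewrite !mxE sum3o !mxE.
  have [h0 h1 h2] := ind _ _ _ H.
  rewrite [RHS]mxE.
  have : (j = 0) \/ (j = 1) \/ (j = 2%:R).
    by case: j => [[|[|[|j]]] Hj] //; [left|right;left|right;right]; apply: val_inj.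
  by case=> [->|[->|->]].
have [B MB] := row_freeP rf.
pose col : 'cV[R]_3 := \col_i q3n X Y Z i.
pose C := B *m col.
exists (fun k => C k 0).
have E : M *m C = col by rewrite /C mulmxA MB mul1mx.
have Ei : forall i : 'I_3, \sum_k M i k * C k 0 = col i 0.
  by move=> i; rewrite -E mxE.
split.
- have := Ei 0; rewrite /dot !mxE /=; under eq_bigr => k _ do rewrite mxE; by [].
- have := Ei 1; rewrite /dot !mxE /=; under eq_bigr => k _ do rewrite mxE; by [].
- have := Ei 2%:R; rewrite /dot !mxE /=; under eq_bigr => k _ do rewrite mxE; by [].
Qed.

Lemma bool_cont (R : realType) (f : bool -> R) : continuous f.
Proof. apply/continuousP => A _; exact: discrete_open. Qed.

Lemma dotD (R : realType) (n : nat) (f : 'I_n -> R) (s t : R) (v w : 'rV[R]_n) :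
  dot f (s *: v + t *: w) = s * dot f v + t * dot f w.
Proof.
rewrite /dot; under eq_bigr => k _ do rewrite !mxE.
rewrite !mulr_sumr -big_split /=; apply: eq_bigr => k _; ring.
Qed.

Definition uf (R : realType) (n : nat) (f : 'I_n -> R) (b : bool) (th : 'I_n) : R :=
  if b then f th else 0.

Lemma exp_uf (R : realType) (n : nat) (f : 'I_n -> R) (v : 'rV[R]_n) b :
  exp_util (uf f) v b = if b then dot f v else 0.
Proof.
case: b => //; rewrite /exp_util /uf /=; apply: big1 => k _; exact: mulr0.
Qed.

Lemma lemB (R : realType) (n : nat) (mu : 'rV[R]_n) (phi : 'rV[R]_n -> 'rV[R]_n) :
  rint_simplex mu -> respects_blackwell mu phi ->
  (forall x, simplex x -> segment x mu (phi x)) ->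
  forall x y lam, simplex x -> simplex y -> phi x <> x -> 0 < lam < 1 ->
  indep3 x y mu -> phi (lam *: x + (1 - lam) *: y) = mu.
Proof.
move=> rmu RB noexp x y lam sx sy pxx /andP[l0 l1] ind.
have [a [/andP[a0 a1] pxe]] := noexp x sx.
have a1' : a < 1.
  rewrite lt_neqAle a1 andbT; apply/eqP => ea; apply: pxx.
  by rewrite pxe ea subrr scale0r addr0 scale1r.
have sz : simplex (lam *: x + (1 - lam) *: y) by apply: simplex_comb => //; lra.
have [r [/andP[r0 r1] pze]] := noexp _ sz.
have [r0e|rne0] := eqVneq r 0.
  by rewrite pze r0e scale0r add0r subr0 scale1r.
have rp : 0 < r by rewrite lt_neqAle eq_sym rne0.
pose K := (1 - a)^-1.
have Kp : 0 < K by rewrite invr_gt0; lra.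
pose Y := - (1 + (1 - r) * K / (r * (1 - lam))).
have Yn : Y < 0.
  have : 0 <= (1 - r) * K / (r * (1 - lam)).
    apply: divr_ge0; [apply: mulr_ge0|apply: mulr_ge0]; lra.
  rewrite /Y; lra.
have [f [fx fy fmu]] := solve3 ind (-1) Y K.
pose astar := fun v : 'rV[R]_n => 0 < dot f v.
have cons : forall v, simplex v -> forall b, exp_util (uf f) v b <= exp_util (uf f) v (astar v).
  move=> v _ b; rewrite !exp_uf /astar.
  by case: b; case: ltP => //; lra.
have cA : compact [set: bool] := bool_compact.
have cu : forall th, continuous (fun b => uf f b th) by move=> th; exact: bool_cont.
have lb : 0 < lam < 1 by rewrite l0 l1.
have := conv_ineq rmu RB cA cu cons sx sy lb.
rewrite /Wfun !exp_uf /astar pze pxe !dotD fx fy fmu.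
have -> : 0 < a * -1 + (1 - a) * K = true.
  apply/idP; rewrite /K mulrV ?unitfE; [lra| apply/eqP; lra].
have -> : 0 < r * (lam * -1 + (1 - lam) * Y) + (1 - r) * K = false.
  apply/negbTE; rewrite -leNgt.
  have -> : r * (lam * -1 + (1 - lam) * Y) + (1 - r) * K = - r.
    rewrite /Y; field; apply/andP; split; apply/negP => /eqP; lra.
  lra.
have hY : (1 - lam) * Y < 0 by rewrite pmulr_rlt0; lra.
by case: (0 < dot f (phi y)) => H; exfalso; clear -H hY l0 l1; lra.
Qed.

Lemma vertexE (R : realType) (n : nat) (i k : 'I_n) : vertex R i 0 k = (k == i)%:R.
Proof. by rewrite /vertex mxE eqxx. Qed.

Lemma vertex_simplex (R : realType) (n : nat) (i : 'I_n) : simplex (vertex R i).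
Proof.
split; first by move=> k; rewrite vertexE ler0n.
rewrite (bigD1 i) //= vertexE eqxx big1 ?addr0 // => k /negbTE ki.
by rewrite vertexE ki.
Qed.

Lemma line2 (R : realType) (n : nat) (w mu : 'rV[R]_n) (be ga : R) :
  (forall k, be * w 0 k + ga * mu 0 k = 0) -> \sum_k w 0 k = 1 -> \sum_k mu 0 k = 1 ->
  w <> mu -> be = 0 /\ ga = 0.
Proof.
move=> E ws ms wm.
have s0 : be + ga = 0.
  have : \sum_k (be * w 0 k + ga * mu 0 k) = 0 by rewrite big1.
  by rewrite big_split /= -!mulr_sumr ws ms !mulr1.
have [be0|bne0] := eqVneq be 0; first by split => //; lra.
exfalso; apply: wm; apply/rowP => k.
have := E k; have -> : ga = - be by lra.
move=> h; apply/eqP; rewrite -subr_eq0; apply/eqP.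
have : be * (w 0 k - mu 0 k) = 0 by rewrite -h; ring.
by move/eqP; rewrite mulf_eq0 (negbTE bne0) /= => /eqP.
Qed.

Lemma minor_indep (R : realType) (n : nat) (x0 mu : 'rV[R]_n) (i j k : 'I_n) :
  j != i -> k != i -> x0 0 j * mu 0 k - x0 0 k * mu 0 j != 0 ->
  indep3 x0 (vertex R i) mu.
Proof.
move=> ji ki D al be ga E.
have Ej := E j; have Ek := E k; have Ei := E i.
rewrite vertexE (negbTE ji) mulr0 addr0 in Ej.
rewrite vertexE (negbTE ki) mulr0 addr0 in Ek.
rewrite vertexE eqxx mulr1 in Ei.
have al0 : al * (x0 0 j * mu 0 k - x0 0 k * mu 0 j) = 0.
  have -> : al * (x0 0 j * mu 0 k - x0 0 k * mu 0 j) =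
     mu 0 k * (al * x0 0 j + ga * mu 0 j) - mu 0 j * (al * x0 0 k + ga * mu 0 k) by ring.
  by rewrite Ej Ek !mulr0 subrr.
have ga0 : ga * (x0 0 j * mu 0 k - x0 0 k * mu 0 j) = 0.
  have -> : ga * (x0 0 j * mu 0 k - x0 0 k * mu 0 j) =
     x0 0 j * (al * x0 0 k + ga * mu 0 k) - x0 0 k * (al * x0 0 j + ga * mu 0 j) by ring.
  by rewrite Ej Ek !mulr0 subrr.
move/eqP: al0; rewrite mulf_eq0 (negbTE D) orbF => /eqP al0.
move/eqP: ga0; rewrite mulf_eq0 (negbTE D) orbF => /eqP ga0.
split => //.
by move: Ei; rewrite al0 ga0 !mul0r addr0 add0r.
Qed.

Lemma cand (R : realType) (n : nat) (a b w mu : 'rV[R]_n) (t1 t2 : R) :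
  indep3 a b mu -> \sum_k w 0 k = 1 -> \sum_k mu 0 k = 1 -> w <> mu -> t1 != t2 ->
  indep3 (t1 *: a + (1 - t1) *: b) w mu \/ indep3 (t2 *: a + (1 - t2) *: b) w mu.
Proof.
move=> ind ws ms wm t12.
case: (EM (indep3 (t1 *: a + (1 - t1) *: b) w mu)) => [h|n1]; [by left|right].
move=> al2 be2 ga2 E2.
case: (EM [/\ al2 = 0, be2 = 0 & ga2 = 0]) => // nz2; exfalso.
apply: n1 => al1 be1 ga1 E1.
case: (EM [/\ al1 = 0, be1 = 0 & ga1 = 0]) => // nz1; exfalso.
have al1n : al1 != 0.
  apply/eqP => al0; apply: nz1.
  have [-> ->] : be1 = 0 /\ ga1 = 0.
    by apply: (line2 _ ws ms wm) => k; have := E1 k; rewrite al0 mul0r add0r.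
  by [].
have al2n : al2 != 0.
  apply/eqP => al0; apply: nz2.
  have [-> ->] : be2 = 0 /\ ga2 = 0.
    by apply: (line2 _ ws ms wm) => k; have := E2 k; rewrite al0 mul0r add0r.
  by [].
have C : forall k, (be2 * al1 * t1 - be1 * al2 * t2) * a 0 k +
    (be2 * al1 * (1 - t1) - be1 * al2 * (1 - t2)) * b 0 k +
    (be2 * ga1 - be1 * ga2) * mu 0 k = 0.
  move=> k; have := E1 k; have := E2 k; rewrite !mxE => e2 e1.
  have -> : (be2 * al1 * t1 - be1 * al2 * t2) * a 0 k +
    (be2 * al1 * (1 - t1) - be1 * al2 * (1 - t2)) * b 0 k +
    (be2 * ga1 - be1 * ga2) * mu 0 k =
    be2 * (al1 * (t1 * a 0 k + (1 - t1) * b 0 k) + be1 * w 0 k + ga1 * mu 0 k) -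
    be1 * (al2 * (t2 * a 0 k + (1 - t2) * b 0 k) + be2 * w 0 k + ga2 * mu 0 k) by ring.
  by rewrite e1 e2 !mulr0 subrr.
have [c1 c2 _] := ind _ _ _ C.
have m0 : (be2 * al1 - be1 * al2) = 0 by move: c1 c2; lra.
have m1 : (be2 * al1) * (t1 - t2) = 0.
  have -> : be2 * al1 * (t1 - t2) = (be2 * al1 * t1 - be1 * al2 * t2) - t2 * (be2 * al1 - be1 * al2) by ring.
  by rewrite c1 m0 mulr0 subrr.
have t12' : t1 - t2 != 0 by rewrite subr_eq0.
move/eqP: m1; rewrite mulf_eq0 (negbTE t12') orbF mulf_eq0 (negbTE al1n) orbF => /eqP be20.
have be10 : be1 = 0.
  move: m0; rewrite be20 mul0r sub0r => /eqP; rewrite oppr_eq0 mulf_eq0 (negbTE al2n) orbF.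
  by move/eqP.
have C1 : forall k, (al1 * t1) * a 0 k + (al1 * (1 - t1)) * b 0 k + ga1 * mu 0 k = 0.
  move=> k; have := E1 k; rewrite be10 !mxE mul0r addr0 => e1; rewrite -e1; ring.
have [d1 d2 _] := ind _ _ _ C1.
have : al1 * t1 + al1 * (1 - t1) = 0 by rewrite d1 d2 addr0.
have -> : al1 * t1 + al1 * (1 - t1) = al1 by ring.
by move/eqP; rewrite (negbTE al1n).
Qed.

Lemma simplex_pos (R : realType) (n : nat) (x : 'rV[R]_n) : simplex x -> exists k, 0 < x 0 k.
Proof.
move=> [x0 xs]; case: (EM (exists k, 0 < x 0 k)) => // H; exfalso.
have : \sum_k x 0 k = 0.
  apply: big1 => k _; apply/eqP; rewrite eq_le x0 andbT leNgt; apply/negP => h.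
  by apply: H; exists k.
by rewrite xs => /eqP; rewrite oner_eq0.
Qed.

Lemma ex_third (n : nat) (j k : 'I_n) : (3 <= n)%N -> exists i : 'I_n, i != j /\ i != k.
Proof.
move=> n3; case: (EM (exists i : 'I_n, i != j /\ i != k)) => // H; exfalso.
have sub : [set: 'I_n] \subset [set j; k].
  apply/fintype.subsetP => i _; rewrite !inE; apply/negPn/negP => /norP [a b].
  by apply: H; exists i.
have := subset_leq_card sub; rewrite cardsT card_ord cards2.
by case: (j != k) => /=; lia.
Qed.

Lemma ex_minor (R : realType) (n : nat) (x0 mu : 'rV[R]_n) :
  \sum_k x0 0 k = 1 -> \sum_k mu 0 k = 1 -> x0 <> mu ->
  exists j k, x0 0 j * mu 0 k - x0 0 k * mu 0 j != 0.
Proof.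
move=> xs ms xm; case: (EM (exists j k, x0 0 j * mu 0 k - x0 0 k * mu 0 j != 0)) => // H.
exfalso; apply: xm; apply/rowP => j.
have E : forall k, x0 0 j * mu 0 k = x0 0 k * mu 0 j.
  move=> k; apply/eqP; rewrite -subr_eq0; apply/negPn/negP => h.
  by apply: H; exists j, k.
rewrite -[x0 0 j]mulr1 -ms mulr_sumr.
under eq_bigr => k _ do rewrite E.
by rewrite -mulr_suml xs mul1r.
Qed.

Lemma step1 (R : realType) (n : nat) (mu x0 : 'rV[R]_n) (F : {set 'I_n}) :
  (3 <= n)%N -> rint_simplex mu -> (2 <= #|F|)%N -> in_face F x0 -> x0 <> mu ->
  exists2 i, i \in F & indep3 x0 (vertex R i) mu.
Proof.
move=> n3 [mupos ms] F2 [sx0 x0F] xm.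
case: (EM (exists j, j \notin F)) => [[j jF]|allF].
  have [k xk] := simplex_pos sx0.
  have kF : k \in F.
    by apply/negPn/negP => kF; move: xk; rewrite x0F // ltxx.
  have : (0 < #|F :\ k|)%N.
    by move: F2; rewrite (cardsD1 k F) kF add1n ltnS.
  rewrite card_gt0 => /set0Pn [i]; rewrite in_setD1 => /andP [ik iF].
  exists i => //.
  apply: (@minor_indep R n x0 mu i j k).
  - by apply/eqP => ji; move: jF; rewrite ji iF.
  - by rewrite eq_sym.
  - rewrite x0F // mul0r sub0r oppr_eq0 mulf_eq0 negb_or; apply/andP; split.
      by rewrite gt_eqF.
    by rewrite gt_eqF.
have [j [k D]] := ex_minor sx0.2 ms xm.
have [i [ij ik]] := ex_third j k n3.
exists i.
  by apply/negPn/negP => iF; apply: allF; exists i.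
by apply: (@minor_indep R n x0 mu i j k) => //; rewrite eq_sym.
Qed.

Lemma mainF (R : realType) (n : nat) (mu : 'rV[R]_n) (phi : 'rV[R]_n -> 'rV[R]_n)
  (F : {set 'I_n}) (w : 'rV[R]_n) :
  (3 <= n)%N -> rint_simplex mu -> respects_blackwell mu phi ->
  (forall x, simplex x -> segment x mu (phi x)) ->
  in_Shat phi F -> (2 <= #|F|)%N -> relint_face F w -> phi w = mu.
Proof.
move=> n3 rmu RB noexp [x0 [fx0 px0]] F2 [sw wF].
have smu : simplex mu by split; [move=> k; apply: ltW; exact: rmu.1 k | exact: rmu.2].
have phimu : phi mu = mu.
  have [t [_ ->]] := noexp mu smu; rewrite -scalerDl; by rewrite addrC subrK scale1r.
have [->|wm] := eqVneq w mu; first exact: phimu.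
have x0m : x0 <> mu by move=> e; apply: px0; rewrite e.
have [i iF ind0] := step1 n3 rmu F2 fx0 x0m.
have wm' : w <> mu by apply/eqP.
suff Sub : forall t, 0 < t < 1 -> indep3 (t *: x0 + (1 - t) *: vertex R i) w mu -> phi w = mu.
  have t12 : (2 / 3 : R) != 1 / 3.
    apply/eqP => h; have : (2 : R) = 1.
      by have := congr1 (fun v => v * 3) h; rewrite !divfK ?pnatr_eq0.
    by move/eqP; rewrite pnatr_eq1.
  case: (cand ind0 sw.2 rmu.2 wm' t12) => h; [apply: (Sub (2/3)) | apply: (Sub (1/3))] => //.
    by apply/andP; split; lra.
  by apply/andP; split; lra.
move=> t t01 indz.
have [z zdef] : exists z, z = t *: x0 + (1 - t) *: vertex R i by eexists.
rewrite -zdef in indz.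
have t01' : 0 <= t <= 1 by case/andP: t01 => a b; apply/andP; split; lra.
have sz : simplex z by rewrite zdef; apply: simplex_comb => //; [exact: fx0.1 | exact: vertex_simplex].
have pz : phi z = mu.
  rewrite zdef; exact: (lemB rmu RB noexp fx0.1 (vertex_simplex R i) px0 t01 ind0).
have zF : forall k, k \notin F -> z 0 k = 0.
  move=> k kF; rewrite zdef !mxE fx0.2 //.
  have -> : (k == i) = false by apply/negbTE; apply/eqP => ki; move: kF; rewrite ki iF.
  by rewrite andbF /= !mulr0 addr0.
have zm : z <> mu.
  move=> e; have E : forall k, 1 * z 0 k + 0 * w 0 k + (-1) * mu 0 k = 0.
    by move=> k; rewrite e; ring.
  by have [/eqP h _ _] := indz _ _ _ E; rewrite oner_eq0 in h.
have [eps [e0 ew]] := @pos_lb R n (fun k => k \in F) (fun k => w 0 k) (fun k kF => (wF k).1 kF).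
pose y := (1 + eps) *: w + (- eps) *: z.
have sy : simplex y.
  split.
    move=> k; rewrite /y !mxE.
    case: (boolP (k \in F)) => kF.
      have := ew k kF; have := simplex_le1 k sz; have := sz.1 k; have := sw.1 k; nra.
    have wk : w 0 k = 0.
      apply/eqP; rewrite eq_le sw.1 andbT leNgt; apply/negP => h.
      by move: kF; rewrite (wF k).2.
    by rewrite wk zF // !mulr0 addr0.
  rewrite /y; under eq_bigr => k _ do rewrite !mxE.
  by rewrite big_split /= -!mulr_sumr sw.2 sz.2; ring.
have lb : 0 < eps / (1 + eps) < 1.
  apply/andP; split; first by rewrite divr_gt0 //; lra.
  by rewrite ltr_pdivrMr; lra.
have indy : indep3 z y mu.
  move=> al be ga E.
  have E' : forall k, (al - be * eps) * z 0 k + (be * (1 + eps)) * w 0 k + ga * mu 0 k = 0.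
    by move=> k; have := E k; rewrite /y !mxE => <-; ring.
  have [h1 h2 h3] := indz _ _ _ E'.
  have be0 : be = 0.
    by move/eqP: h2; rewrite mulf_eq0 => /orP [/eqP //|]; move/eqP; lra.
  by split => //; move: h1; rewrite be0 mul0r subr0.
have := lemB rmu RB noexp sz sy (fun e => zm (etrans (esym e) pz)) lb indy.
have -> : eps / (1 + eps) *: z + (1 - eps / (1 + eps)) *: y = w.
  have ne : 1 + eps != 0 by rewrite gt_eqF // addr_gt0 // ltr01.
  apply/rowP => k; rewrite /y !mxE; field; exact: ne.
by [].
Qed.

Unset Implicit Arguments.

Theorem proposition2 (R : realType) (n : nat) (mu : 'rV[R]_n)
  (phi : 'rV[R]_n -> 'rV[R]_n) :
  (3 <= n)%N ->
  rint_simplex mu ->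
  (forall x, simplex x -> simplex (phi x)) ->
  respects_blackwell mu phi ->
  produces_contractive mu phi ->
  ~ produces_expansive mu phi ->
  occasionally_stubborn phi.
Proof.
move=> n3 rmu _ RB _ nexp.
have noexp : forall x, simplex x -> segment x mu (phi x).
  move=> x sx; case: (EM (segment x mu (phi x))) => // h; exfalso.
  by apply: nexp; exists x.
right; exists mu; split.
  by split; [move=> k; apply: ltW; exact: rmu.1 k | exact: rmu.2].
split.
  move=> F FS F3 x xF; apply: (mainF n3 rmu RB noexp FS) => //.
  exact: leq_trans F3.
split.
  by move=> F FS F2 ; left => x xF; apply: (mainF n3 rmu RB noexp FS) => //; rewrite F2.
move=> i _.
have [t [t01 ->]] := noexp _ (vertex_simplex R i).
exists (1 - t); split; first by case/andP: t01 => a b; apply/andP; split; lra.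
have -> : 1 - (1 - t) = t by ring.
by rewrite addrC.
Qed.
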